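(* The class $\mathcal K_\omega^*$ has the expansion property relative to the class $\mathcal K_\omega$.
   Context: Expansion property: let $L\subseteq L^*$ be relational languages, $\mathcal K$ a class of finite $L$-structures and $\mathcal K^*$ a class of finite $L^*$-structures whose $L$-reducts lie in $\mathcal K$. $\mathcal K^*$ has the expansion property relative to $\mathcal K$ if for every $\mathbf A\in\mathcal K$ there is $\mathbf B\in\mathcal K$ such that for all $\mathbf A^*,\mathbf B^*\in\mathcal K^*$ whose $L$-reducts are $\mathbf A$ and $\mathbf B$ respectively, $\mathbf A^*$ embeds into $\mathbf B^*$. A directed graph $(A,E)$ ($E$ irreflexive and asymmetric) is complete multipartite if the relation ''$u=v$, or neither $E(u,v)$ nor $E(v,u)$'' is an equivalence relation on $A$; its classes are called the parts. $\mathcal K_\omega$ is the class of all finite complete multipartite directed graphs (any finite number of parts), i.e. the age of the generic complete $\omega$-partite directed graph $\omega*I_\omega$. $\mathcal K_\omega^*$ is the class of finite structures $(A,E,<)$ where $(A,E)\in\mathcal K_\omega$ and $<$ is a linear order on $A$ for which every part is an interval. *)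

(* Defs.v *)
From mathcomp Require Import all_boot.
Set Implicit Arguments. Unset Strict Implicit. Unset Printing Implicit Defensive.

Definition is_digraph (T : finType) (E : rel T) : Prop :=
  (forall x, ~~ E x x) /\ (forall x y, E x y -> ~~ E y x).

Definition same_part (T : finType) (E : rel T) : rel T :=
  fun u v => (u == v) || (~~ E u v && ~~ E v u).

Definition complete_multipartite (T : finType) (E : rel T) : Prop :=
  is_digraph E /\
  [/\ reflexive (same_part E), symmetric (same_part E) & transitive (same_part E)].

Definition strict_linear_order (T : finType) (lt : rel T) : Prop :=
  [/\ (forall x, ~~ lt x x), transitive lt & (forall x y, x != y -> lt x y || lt y x)].

(* Membership in K_omega^*: (T,E) in K_omega and lt a linear order on T
   for which every part is an interval. *)
Definition in_K_omega_star (T : finType) (E : rel T) (lt : rel T) : Prop :=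
  [/\ complete_multipartite E, strict_linear_order lt &
      (forall x y z, same_part E x y -> lt x z -> lt z y -> same_part E x z)].

Definition embedding (A B : finType) (EA : rel A) (ltA : rel A)
    (EB : rel B) (ltB : rel B) (f : A -> B) : Prop :=
  [/\ injective f,
      (forall x y, EB (f x) (f y) = EA x y) &
      (forall x y, ltB (f x) (f y) = ltA x y)].

(* Main.v *)
Require Import Defs.
From mathcomp Require Import all_boot.
From mathcomp Require Import zify.
Set Implicit Arguments. Unset Strict Implicit. Unset Printing Implicit Defensive.

Section Count.
Variable I : finType.
Local Notation G := {ffun I -> bool}.

Definition flip (c : I) (g : G) : G := [ffun i => if i == c then ~~ g i else g i].

Lemma flipK c : involutive (flip c).
Proof. by move=> g; apply/ffunP=> i; rewrite !ffunE; case: eqP => //= _; rewrite negbK. Qed.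

Lemma count1 (Q : G -> bool) (c : I) (b : bool) :
  (forall g g' : G, (forall i, i != c -> g i = g' i) -> Q g = Q g') ->
  #|[set g : G | Q g && (g c == b)]| * 2 = #|[set g : G | Q g]|.
Proof.
move=> HQ.
have E : #|[set g : G | Q g && (g c != b)]| = #|[set g : G | Q g && (g c == b)]|.
  rewrite -(card_imset [set g : G | Q g && (g c == b)] (inv_inj (flipK c))); apply: eq_card => g.
  apply/idP/imsetP.
    rewrite inE => /andP[Qg gc]; exists (flip c g); last by rewrite flipK.
    rewrite inE ffunE eqxx.
    have -> : (~~ g c == b) by move: gc; case: (g c); case: b.
    rewrite andbT -(HQ g) // => i ic; rewrite ffunE (negbTE ic) //.
  move=> [h]; rewrite inE => /andP[Qh /eqP hc] ->; rewrite inE ffunE eqxx hc.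
  have -> : (~~ b != b) by clear hc; case: b.
  rewrite andbT -(HQ h) //.
  by move=> i ic; rewrite ffunE (negbTE ic).
have := cardsID [set g : G | g c == b] [set g : G | Q g].
have -> : [set g : G | Q g] :&: [set g : G | g c == b] = [set g : G | Q g && (g c == b)].
  by apply/setP=> g; rewrite !inE.
have -> : [set g : G | Q g] :\: [set g : G | g c == b] = [set g : G | Q g && (g c != b)].
  by apply/setP=> g; rewrite !inE andbC.
by rewrite E muln2 addnn => <-.
Qed.

Lemma countK (Q : G -> bool) (ks : seq I) (h : G) :
  uniq ks ->
  (forall g g' : G, (forall i, i \notin ks -> g i = g' i) -> Q g = Q g') ->
  #|[set g : G | Q g && all (fun c => g c == h c) ks]| * 2 ^ size ks = #|[set g : G | Q g]|.
Proof.
elim: ks Q => [|c ks IH] Q /=.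
  by move=> _ _; rewrite muln1; apply: eq_card => g; rewrite !inE andbT.
move=> /andP[cks uks] HQ.
rewrite expnS mulnA.
have -> : #|[set g : G | Q g && ((g c == h c) && all (fun c0 => g c0 == h c0) ks)]|
   = #|[set g : G | (Q g && all (fun c0 => g c0 == h c0) ks) && (g c == h c)]|.
  by apply: eq_card => g; rewrite !inE; case: (Q g); case: (g c == h c); rewrite ?andbT ?andbF.
rewrite count1.

  apply: IH => // g g' E; apply: HQ => i; rewrite inE negb_or => /andP[_]; exact: E.
move=> g g' E; congr andb.
  apply: HQ => i; rewrite inE => ni; apply: E.
  by apply: contraNneq ni => ->; rewrite eqxx.
apply: eq_in_all => i iks /=.
case: (eqVneq i c) => [ic|ic]; last by rewrite E.
by move: cks; rewrite -ic iks.
Qed.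

Lemma card_G_le (S : {set G}) : #|S| <= 2 ^ #|I|.
Proof. by have := max_card (mem S); rewrite card_ffun card_bool. Qed.

Lemma count_fail (X : eqType) (s : seq X) (K : X -> {set I}) (P : X -> G -> bool) d :
  uniq s ->
  {in s &, forall l l', l != l' -> [disjoint K l & K l']} ->
  (forall l (g g' : G), (forall c, c \in K l -> g c = g' c) -> P l g = P l g') ->
  {in s, forall l, exists g, P l g} ->
  (forall l, 2 ^ #|K l| <= d.+1) ->
  #|[set g : G | all (fun l => ~~ P l g) s]| * d.+1 ^ size s <= 2 ^ #|I| * d ^ size s.
Proof.
elim: s => [|l s IH] /=.
  by move=> *; rewrite !muln1 card_G_le.
move=> /andP[ls us] Hdis HP Hsat HK.
set Q := fun g : G => all (fun l => ~~ P l g) s.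
have IH' : #|[set g : G | Q g]| * d.+1 ^ size s <= 2 ^ #|I| * d ^ size s.
  apply: IH => //.
  - by move=> x y xs ys; apply: Hdis; rewrite inE ?xs ?ys orbT.
  - by move=> x xs; apply: Hsat; rewrite inE xs orbT.
have [g0 Pg0] := Hsat l (mem_head _ _).
have HQ : forall g g' : G, (forall i, i \notin enum (K l) -> g i = g' i) -> Q g = Q g'.
  move=> g g' E; apply: eq_in_all => l' l's /=; congr negb; apply: HP => c cK.
  apply: E; rewrite mem_enum.
  have : l != l' by apply: contraNneq ls => ->.
  move=> /(Hdis l l' (mem_head _ _) (mem_behead (s:=l :: s) l's)) H.
  by rewrite (disjointFl H cK).
have := countK g0 (enum_uniq (K l)) HQ.
rewrite -cardE => HA0.
set q := #|[set g : G | Q g]| in HA0 IH' *.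
set a := #|[set g : G | Q g && P l g]|.
set b := #|[set g : G | Q g && ~~ P l g]|.
have qab : q = a + b.
  rewrite /q /a /b -(cardsID [set g : G | P l g] [set g : G | Q g]); congr addn;
  by apply: eq_card => g; rewrite !inE // andbC.
have A0a : #|[set g : G | Q g && all (fun c => g c == g0 c) (enum (K l))]| <= a.
  apply: subset_leq_card; apply/subsetP => g; rewrite !inE => /andP[-> Hall] /=.
  rewrite (HP l g g0) // => c cK; apply/eqP.
  by move: Hall => /allP; apply; rewrite mem_enum.
have qa : q <= a * d.+1.
  rewrite -HA0; apply: leq_trans (leq_mul A0a (HK l)).
  by rewrite leq_pmul2r ?expn_gt0.
have bq : b * d.+1 <= q * d.
  move: qa; rewrite qab; nia.
have -> : #|[set g : G | ~~ P l g && Q g]| = b.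
  by apply: eq_card => g; rewrite !inE andbC.
rewrite expnS mulnA.
apply: (leq_trans (leq_mul bq (leqnn _))).
rewrite expnS mulnCA -mulnA mulnCA.
by rewrite leq_mul2l IH' orbT.
Qed.
End Count.

Lemma card_has (T D : finType) (P : D -> T -> bool) (s : seq D) :
  #|[set g | has (fun dd => P dd g) s]| <= \sum_(dd <- s) #|[set g | P dd g]|.
Proof.
elim: s => [|x s IH] /=.
  by rewrite big_nil leqn0 cards_eq0; apply/eqP/setP => g; rewrite !inE.
rewrite big_cons.
have -> : [set g | P x g || has (fun dd => P dd g) s]
          = [set g | P x g] :|: [set g | has (fun dd => P dd g) s].
  by apply/setP => g; rewrite !inE.
apply: leq_trans (leq_card_setU _ _).1 _.
by rewrite leq_add2l.
Qed.

Lemma card_exists (T D : finType) (P : D -> T -> bool) :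
  #|[set g | [exists dd, P dd g]]| <= \sum_dd #|[set g | P dd g]|.
Proof.
have := card_has P (enum D); rewrite big_enum /=.
apply: leq_trans; apply: subset_leq_card; apply/subsetP => g; rewrite !inE.
by move=> /existsP[dd Pd]; apply/hasP; exists dd; rewrite ?mem_enum.
Qed.

Lemma pow_mono a b e : a <= b -> a ^ e <= b ^ e.
Proof. by move=> ab; elim: e => // e IH; rewrite !expnS leq_mul. Qed.

Lemma bern d k : d ^ k * (d + k) <= d.+1 ^ k * d.
Proof.
elim: k => [|k IH]; first by rewrite !expn0 !mul1n addn0.
rewrite !expnS.
have h1 : d ^ k * d <= d.+1 ^ k * d.
  by rewrite leq_mul // pow_mono.
nia.
Qed.

Lemma two_pow d : 0 < d -> 2 * d ^ d <= d.+1 ^ d.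
Proof.
move=> d0; have := bern d d.
rewrite addnn -mul2n => h; rewrite -(leq_pmul2r d0); nia.
Qed.

Lemma pow_blk d s : 0 < d -> 2 ^ s * d ^ (d * s) <= d.+1 ^ (d * s).
Proof.
move=> d0; rewrite !expnM -expnMn; apply: pow_mono; exact: two_pow.
Qed.

Lemma big_ineq d s L D : 0 < d -> d * s <= L -> D < 2 ^ s -> D * d ^ L < d.+1 ^ L.
Proof.
move=> d0 dsL Ds.
rewrite -(subnKC dsL) !expnD.
have p1 : 0 < d ^ (d * s) * d ^ (L - d * s) by rewrite muln_gt0 !expn_gt0 d0.
apply: (@leq_trans (2 ^ s * (d ^ (d * s) * d ^ (L - d * s)))).
  by rewrite ltn_pmul2r.
rewrite mulnA leq_mul // ?pow_blk // pow_mono //.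
Qed.

Lemma sq_le r : 4 <= r -> r * r <= 2 ^ r.
Proof.
elim: r => // r IH; rewrite leq_eqVlt => /orP[/eqP<- //|r4].
have := IH r4; rewrite expnS; nia.
Qed.

Lemma exr a b : exists r, a + b * r <= 2 ^ r.
Proof.
exists (a + b + 4); apply: leq_trans (sq_le _) => //; first nia.
by rewrite leq_addl.
Qed.

Section Build.
Variables (n M : nat).
Definition BB : finType := ('I_n * 'I_M)%type.
Definition II : finType := (BB * BB)%type.
Definition GG := {ffun II -> bool}.
Definition rk (u : BB) : nat := enum_rank u.
Definition EBg (g : GG) : rel BB :=
  fun u v => (u.1 != v.1) && (if rk u < rk v then g (u, v) else ~~ g (v, u)).

Lemma rk_inj : injective rk.
Proof. by move=> u v /val_inj /enum_rank_inj. Qed.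

Lemma EBg_sp g u v : same_part (EBg g) u v = (u.1 == v.1).
Proof.
rewrite /same_part /EBg.
case: u v => [a b] [c d] /=.
case: (eqVneq a c) => [->|uv] /=; first by rewrite orbT.
have uv' : (a, b) != (c, d) by rewrite xpair_eqE negb_and uv.
rewrite (negbTE uv') /=.
case: (ltngtP (rk (a,b)) (rk (c,d))) => [h|h|/rk_inj e]; last by rewrite e eqxx in uv'.
  by case: (g _).
by case: (g _).
Qed.

Lemma EBg_cm g : complete_multipartite (EBg g).
Proof.
split; first split.
- by move=> x; rewrite /EBg eqxx.
- move=> x y; rewrite /EBg => /andP[xy H]; rewrite eq_sym xy /=.
  have xy' : x != y by apply: contraNneq xy => ->.
  case: (ltngtP (rk x) (rk y)) H => [h|h|/rk_inj e]; last by rewrite e eqxx in xy'.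
    by move=> ->.
  by move=> H; rewrite H.
split=> [x|x y|x y z]; rewrite !EBg_sp //.
by move=> /eqP h1 /eqP h2; apply/eqP; rewrite h1.
Qed.
End Build.

Lemma quot_eq n X Y j k : j < n -> k < n -> n * X + j = n * Y + k -> X = Y /\ j = k.
Proof.
move=> jn kn E.
have XY : X = Y.
  case: (ltngtP X Y) => // h.
    have : n * X.+1 <= n * Y by rewrite leq_mul2l h orbT.
    lia.
  have : n * Y.+1 <= n * X by rewrite leq_mul2l h orbT.
  lia.
by subst; split => //; lia.
Qed.

Lemma lin_eq a b u v u' v' : a != b -> u + v * a = u' + v' * a -> u + v * b = u' + v' * b ->
  u = u' /\ v = v'.
Proof.
move=> ab E1 E2.
have : v = v'.
  wlog : a b u v u' v' ab E1 E2 / a < b.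
    move=> W; case: (ltngtP a b) => [h|h|h]; first exact: (W a b u v u' v').
      by apply: (W b a u v u' v') => //; rewrite eq_sym.
    by rewrite h eqxx in ab.
  move=> lab; have [k bk] : exists k, b = a + k.+1 by exists (b - a).-1; lia.
  subst b.
  nia.
move=> vv; split => //; subst; lia.
Qed.

Section Main.
Variables (A : finType) (EA : rel A) (m : nat).
Hypothesis hA : complete_multipartite EA.
Let n := #|A|.
Let M := n * (m * n).
Local Notation B := (BB n M).
Local Notation G := (GG n M).
Local Notation sp := (same_part EA).

Lemma Ylt (a b : 'I_m) (t j : 'I_n) : n * (a + b * t) + j < M.
Proof.
have ha := ltn_ord a; have hb := ltn_ord b; have ht := ltn_ord t; have hj := ltn_ord j.
have h1 : a + b * t < m * n.
  case: m a b ha hb => // m' a b ha hb; case: n t j ht hj => // n' t j ht hj.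
  have : b * t <= m' * n' by apply: leq_mul.
  rewrite mulSn mulnS; lia.
have : n * (a + b * t).+1 <= n * (m * n) by rewrite leq_mul2l h1 orbT.
rewrite /M; lia.
Qed.

Definition Dat := ({ffun B -> B} * {ffun A -> 'I_n * 'I_n})%type.

Definition place (dd : Dat) (l : 'I_m * 'I_m) (x : A) : B :=
  dd.1 ((dd.2 x).1, Ordinal (Ylt l.1 l.2 (dd.2 x).1 (dd.2 x).2)).

Definition matchP (dd : Dat) l (g : G) :=
  [forall x, forall y, ~~ sp x y ==> (EBg g (place dd l x) (place dd l y) == EA x y)].

Definition Kset (dd : Dat) l : {set II n M} :=
  [set c | [exists x, exists y, ~~ sp x y && (c == (place dd l x, place dd l y))]].

Definition valid (dd : Dat) :=
  injectiveb dd.1 && [forall u, forall v, ((dd.1 u).1 == (dd.1 v).1) == (u.1 == v.1)] &&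
  [forall x, forall y,
    (((dd.2 x).2 == (dd.2 y).2) ==> (x == y)) && (~~ sp x y ==> ((dd.2 x).1 != (dd.2 y).1))].

Lemma sp_sym x y : sp x y = sp y x.
Proof. by rewrite /same_part eq_sym andbC. Qed.

Lemma place_eq (dd : Dat) (l l' : 'I_m * 'I_m) (x x' : A) : injective dd.1 -> place dd l x = place dd l' x' ->
  (dd.2 x).1 = (dd.2 x').1 /\ l.1 + l.2 * (dd.2 x).1 = l'.1 + l'.2 * (dd.2 x).1
  /\ (dd.2 x).2 = (dd.2 x').2.
Proof.
move=> inj /inj [e1 e2].
have [q1 q2] := quot_eq (ltn_ord (dd.2 x).2) (ltn_ord (dd.2 x').2) e2.
split=> //; split; last exact: val_inj.
by rewrite q1 e1.
Qed.

Lemma Kdisj (dd : Dat) (l l' : 'I_m * 'I_m) : valid dd -> l != l' -> [disjoint Kset dd l & Kset dd l'].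
Proof.
move=> /andP[/andP[/injectiveP inj _] /forallP V] ll.
rewrite -setI_eq0; apply/eqP/setP => c; rewrite !inE.
apply/negP => /andP[/existsP[x /existsP[y /andP[xy /eqP ->]]]].
move=> /existsP[x' /existsP[y' /andP[_ /eqP [e1 e2]]]].
have [tx [ex _]] := place_eq inj e1.
have [ty [ey _]] := place_eq inj e2.
have /andP[_ /implyP /(_ xy) txy] := forallP (V x) y.
have [u v] := lin_eq txy ex ey.
by move: ll; case: l l' u v {e1 e2 ex ey} => [a b] [a' b'] /= u v; rewrite xpair_eqE; apply/negP;
  rewrite negbK; apply/andP; split; apply/eqP; apply: val_inj.
Qed.

Lemma cross_EA x y : ~~ sp x y -> EA x y = ~~ EA y x.
Proof.
case: hA => [[irr asym] _]; rewrite /same_part negb_or => /andP[_].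
rewrite negb_and !negbK.
case Exy: (EA x y); case Eyx: (EA y x) => //= _.
by have := asym _ _ Exy; rewrite Eyx.
Qed.

Lemma Kdep (dd : Dat) l (g g' : G) :
  (forall c, c \in Kset dd l -> g c = g' c) -> matchP dd l g = matchP dd l g'.
Proof.
move=> E; apply: eq_forallb => x; apply: eq_forallb => y.
case: (boolP (sp x y)) => //= xy; congr (_ == _); rewrite /EBg.
rewrite (E (place dd l x, place dd l y)); last first.
  by rewrite inE; apply/existsP; exists x; apply/existsP; exists y; rewrite xy eqxx.
rewrite (E (place dd l y, place dd l x)) //.
rewrite inE; apply/existsP; exists y; apply/existsP; exists x; rewrite sp_sym xy eqxx.
by [].
Qed.

Lemma place_inj (dd : Dat) l : valid dd -> injective (place dd l).
Proof.
move=> /andP[/andP[/injectiveP inj _] /forallP V] x y /(place_eq inj) [_ [_ e]].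
by have /andP[/implyP /(_ (introT eqP e)) /eqP] := forallP (V x) y.
Qed.

Lemma place_part (dd : Dat) l x y : valid dd -> ~~ sp x y ->
  (place dd l x).1 != (place dd l y).1.
Proof.
move=> /andP[/andP[_ /forallP P] /forallP V] xy.
have /andP[_ /implyP /(_ xy) txy] := forallP (V x) y.
by rewrite /place (eqP (forallP (P _) _)) /=.
Qed.

Lemma Ksat (dd : Dat) l : valid dd -> exists g : G, matchP dd l g.
Proof.
move=> vd.
exists [ffun c : II n M => [exists x, exists y, (c == (place dd l x, place dd l y)) && EA x y]].
apply/forallP => x; apply/forallP => y; apply/implyP => xy.
rewrite /EBg place_part //=.
have g0E : forall x' y', ~~ sp x' y' ->
    [exists x0, exists y0, ((place dd l x', place dd l y') == (place dd l x0, place dd l y0)) && EA x0 y0]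
    = EA x' y'.
  move=> x' y' _; apply/existsP/idP => [[x0 /existsP[y0 /andP[/eqP[e1 e2] H]]]|H].
    by rewrite (place_inj vd e1) (place_inj vd e2).
  by exists x'; apply/existsP; exists y'; rewrite eqxx H.
case: ifP => _; rewrite ffunE g0E //; last by rewrite sp_sym.
by rewrite (cross_EA xy).
Qed.

Lemma Kcard (dd : Dat) l : #|Kset dd l| <= n * n.
Proof.
apply: (@leq_trans #|[set (place dd l p.1, place dd l p.2) | p : A * A]|).
  apply: subset_leq_card; apply/subsetP => c; rewrite inE => /existsP[x /existsP[y /andP[_ /eqP ->]]].
  by apply/imsetP; exists (x, y).
by apply: leq_trans (leq_imset_card _ _) _; rewrite card_prod.
Qed.

Definition allfail (dd : Dat) (g : G) := all (fun l => ~~ matchP dd l g) (enum {: 'I_m * 'I_m}).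

Lemma per_bound (dd : Dat) : valid dd ->
  #|[set g : G | allfail dd g]| * (2 ^ (n * n)) ^ (m * m)
   <= 2 ^ #|II n M| * (2 ^ (n * n)).-1 ^ (m * m).
Proof.
move=> vd.
have sz : size (enum {: 'I_m * 'I_m}) = m * m by rewrite -cardE card_prod card_ord.
have := @count_fail (II n M) _ (enum {: 'I_m * 'I_m}) (Kset dd) (matchP dd) (2 ^ (n * n)).-1.
rewrite sz prednK ?expn_gt0 //; apply.
- exact: enum_uniq.
- by move=> l l' _ _; apply: Kdisj.
- exact: Kdep.
- by move=> l _; apply: Ksat.
- by move=> l; rewrite leq_exp2l // Kcard.
Qed.

Lemma good_exists :
  #|{: Dat}| * (2 ^ (n * n)).-1 ^ (m * m) < (2 ^ (n * n)) ^ (m * m) ->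
  exists g : G, forall dd, valid dd -> exists l, matchP dd l g.
Proof.
move=> Hnum.
set bad := [set g : G | [exists dd, valid dd && allfail dd g]].
set c := (2 ^ (n * n)) ^ (m * m).
set d := (2 ^ (n * n)).-1 ^ (m * m).
have Hb : #|bad| * c <= #|{: Dat}| * (2 ^ #|II n M| * d).
  apply: leq_trans (leq_mul (card_exists (fun dd g => valid dd && allfail dd g)) (leqnn c)) _.
  rewrite big_distrl /=.
  apply: (@leq_trans (\sum_(dd : Dat) (2 ^ #|II n M| * d))).
    apply: leq_sum => dd _.
    case: (boolP (valid dd)) => vd.
      apply: leq_trans (per_bound vd); rewrite leq_mul2r; apply/orP; right.
      by apply: subset_leq_card; apply/subsetP => g; rewrite !inE.
    suff -> : #|[set g : G | false && allfail dd g]| = 0 by [].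
    by apply: eq_card0 => g; rewrite !inE.
  by rewrite sum_nat_const.
have cpos : 0 < c by rewrite expn_gt0 expn_gt0.
have Hlt : #|bad| < 2 ^ #|II n M|.
  rewrite -(ltn_pmul2r cpos); apply: leq_ltn_trans Hb _.
  rewrite mulnCA ltn_pmul2l ?expn_gt0 //.
have : ~~ ([set: G] \subset bad).
  apply/negP => /subset_leq_card; rewrite cardsT card_ffun card_bool.
  by rewrite leqNgt Hlt.
move=> /subsetPn [g _ gb]; exists g => dd vd.
move: gb; rewrite inE negb_exists => /forallP /(_ dd); rewrite vd /= /allfail.
by move=> /allPn [l _]; rewrite negbK => ml; exists l.
Qed.
End Main.

Section OrdFacts.
Variables (T : finType) (E lt : rel T).
Hypothesis H : in_K_omega_star E lt.

Lemma lt_irr x : ~~ lt x x.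
Proof. by case: H => _ [irr _ _] _; apply: irr. Qed.
Lemma lt_trans y x z : lt x y -> lt y z -> lt x z.
Proof. by case: H => _ [_ tr _] _; apply: tr. Qed.
Lemma lt_total x y : x != y -> lt x y || lt y x.
Proof. by case: H => _ [_ _ tot] _; apply: tot. Qed.
Lemma lt_asym x y : lt x y -> ~~ lt y x.
Proof. by move=> xy; apply/negP => yx; have := lt_irr x; rewrite (lt_trans xy yx). Qed.
Lemma lt_interval x y z : same_part E x y -> lt x z -> lt z y -> same_part E x z.
Proof. by case: H => _ _; apply. Qed.
Lemma sp_refl x : same_part E x x.
Proof. by case: H => [[_ [r _ _]] _ _]. Qed.
Lemma sp_symm x y : same_part E x y = same_part E y x.
Proof. by case: H => [[_ [_ s _]] _ _]. Qed.
Lemma sp_tr y x z : same_part E x y -> same_part E y z -> same_part E x z.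
Proof. by case: H => [[_ [_ _ t]] _ _]; apply: t. Qed.
End OrdFacts.

Lemma card_lt_excl (T : finType) (P : pred T) x : ~~ P x -> #|[set y | P y]| < #|T|.
Proof.
move=> Px; rewrite -cardsT; apply: proper_card; apply/properP; split.
  exact: subsetT.
by exists x; rewrite ?inE.
Qed.


Section ASide.
Variables (A : finType) (EA ltA : rel A).
Hypothesis H : in_K_omega_star EA ltA.
Local Notation sp := (same_part EA).

Definition tA x := #|[set y | ltA y x && ~~ sp y x]|.
Definition jA x := #|[set y | ltA y x]|.

Lemma jA_lt x : jA x < #|A|.
Proof. by apply: card_lt_excl (x) _; rewrite (lt_irr H). Qed.
Lemma tA_lt x : tA x < #|A|.
Proof. by apply: card_lt_excl (x) _; rewrite (negbTE (lt_irr H x)). Qed.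

Lemma jA_mono x y : ltA x y -> jA x < jA y.
Proof.
move=> xy; apply: proper_card; apply/properP; split.
  by apply/subsetP => z; rewrite !inE => zx; exact: (lt_trans H zx xy).
by exists x; rewrite !inE ?xy ?(lt_irr H x).
Qed.

Lemma tA_mono x y : ltA x y -> ~~ sp x y -> tA x < tA y.
Proof.
move=> xy nsp; apply: proper_card; apply/properP; split.
  apply/subsetP => z; rewrite !inE => /andP[zx nzx].
  rewrite (lt_trans H zx xy) /=; apply/negP => zy.
  by have := lt_interval H zy zx xy; rewrite (negbTE nzx).
by exists x; rewrite !inE ?xy ?nsp ?(lt_irr H x) // (sp_refl H) andbF.
Qed.

Lemma tA_eq_aux x y : ltA x y -> sp x y -> tA x = tA y.
Proof.
move=> xy s; have s' : sp y x by rewrite (sp_symm H).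
apply: eq_card => z; rewrite !inE.
apply/andP/andP => [[zx nzx]|[zy nzy]].
  split; first exact: (lt_trans H zx xy).
  by apply: contra nzx => zy; exact: (sp_tr H zy s').
split.
  have zx : z != x by apply: contraNneq nzy => ->.
  case/orP: (lt_total H zx) => // xz.
  have sz : sp z x by rewrite (sp_symm H); exact: (lt_interval H s xz zy).
  by move: nzy; rewrite (sp_tr H sz s).
by apply: contra nzy => zx; exact: (sp_tr H zx s).
Qed.

Lemma tA_eq x y : sp x y -> tA x = tA y.
Proof.
move=> s; case: (eqVneq x y) => [->//|ne].
case/orP: (lt_total H ne) => h; first exact: tA_eq_aux.
by rewrite (tA_eq_aux h) // (sp_symm H).
Qed.
End ASide.

Section BSide.
Variables (n M : nat) (g : GG n M) (ltB : rel (BB n M)).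
Hypothesis H : in_K_omega_star (EBg g) ltB.
Local Notation B := (BB n M).

Definition PB (b : B) := #|[set q : 'I_n | (q != b.1) && [exists c : B, (c.1 == q) && ltB c b]]|.
Definition WB (b : B) := #|[set c : B | (c.1 == b.1) && ltB c b]|.

Lemma PB_lt b : PB b < n.
Proof. by rewrite -[n in _ < n]card_ord; apply: card_lt_excl (b.1) _; rewrite eqxx. Qed.

Lemma WB_lt b : WB b < M.
Proof.
have -> : M = #|[set c : B | c.1 == b.1]|.
  have -> : [set c : B | c.1 == b.1] = setX [set b.1] [set: 'I_M].
    by apply/setP => -[u v]; rewrite !inE andbT.
  by rewrite cardsX cards1 cardsT card_ord mul1n.
apply: proper_card; apply/properP; split.
  by apply/subsetP => c; rewrite !inE => /andP[].
by exists b; rewrite !inE ?eqxx ?(negbTE (lt_irr H b)).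
Qed.

Lemma spB u v : same_part (EBg g) u v = (u.1 == v.1).
Proof. exact: EBg_sp. Qed.

Lemma PB_mono b c : b.1 != c.1 -> ltB b c -> PB b < PB c.
Proof.
move=> bc lbc; apply: proper_card; apply/properP; split.
  apply/subsetP => q; rewrite !inE => /andP[qb /existsP[d /andP[/eqP dq db]]].
  apply/andP; split; last by apply/existsP; exists d; rewrite dq eqxx (lt_trans H db lbc).
  apply/negP => /eqP qc.
  have sdc : same_part (EBg g) d c by rewrite spB dq qc.
  have := lt_interval H sdc db lbc; rewrite spB dq => /eqP bq.
  by rewrite bq eqxx in qb.
exists b.1; rewrite !inE ?eqxx //= bc /=.
by apply/existsP; exists b; rewrite eqxx lbc.
Qed.

Lemma PB_eq_aux b c : b.1 == c.1 -> ltB b c -> PB b = PB c.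
Proof.
move=> /eqP bc lbc; apply: eq_card => q; rewrite !inE -bc.
apply/andP/andP => -[qb /existsP[d /andP[/eqP dq dl]]]; split => //; apply/existsP; exists d.
  by rewrite dq eqxx (lt_trans H dl lbc).
rewrite dq eqxx /=.
have db : d != b by apply: contraNneq qb => e; rewrite -dq e.
case/orP: (lt_total H db) => // bd.
have sbc : same_part (EBg g) b c by rewrite spB bc.
have := lt_interval H sbc bd dl; rewrite spB dq => /eqP e.
by rewrite e eqxx in qb.
Qed.

Lemma PB_eq b c : b.1 == c.1 -> PB b = PB c.
Proof.
move=> bc; case: (eqVneq b c) => [->//|ne].
case/orP: (lt_total H ne) => h; first exact: PB_eq_aux.
by rewrite (PB_eq_aux _ h) // eq_sym.
Qed.

Lemma WB_mono b c : b.1 == c.1 -> ltB b c -> WB b < WB c.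
Proof.
move=> /eqP bc lbc; apply: proper_card; apply/properP; split.
  apply/subsetP => d; rewrite !inE -bc => /andP[-> db] /=.
  exact: (lt_trans H db lbc).
exists b; first by rewrite !inE bc eqxx lbc.
by rewrite !inE (negbTE (lt_irr H b)) andbF.
Qed.

Lemma part_iff b c : (b.1 == c.1) = (PB b == PB c).
Proof.
apply/idP/idP => [bc|]; first by rewrite (PB_eq bc).
apply: contraLR => bc.
have ne : b != c by apply: contraNneq bc => ->.
case/orP: (lt_total H ne) => h.
  by rewrite neq_ltn (PB_mono bc h).
by rewrite neq_ltn (PB_mono _ h) ?orbT // eq_sym.
Qed.

Lemma lex_lt b c : (PB b < PB c) || ((PB b == PB c) && (WB b < WB c)) -> ltB b c.
Proof.
move=> hl.
have ne : b != c.
  by apply: contraTneq hl => ->; rewrite ltnn eqxx ltnn.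
case/orP: (lt_total H ne) => // cb; exfalso.
case: (boolP (c.1 == b.1)) => cb1.
  have e := PB_eq cb1; have w := WB_mono cb1 cb.
  by move: hl; rewrite e ltnn eqxx /= => h; have := ltn_trans h w; rewrite ltnn.
have := PB_mono cb1 cb; move: hl => /orP[h1|/andP[/eqP e _]].
  by move=> /(ltn_trans h1); rewrite ltnn.
by rewrite e ltnn.
Qed.

Definition rho (b : B) : B := (Ordinal (PB_lt b), Ordinal (WB_lt b)).

Lemma rho_inj : injective rho.
Proof.
move=> b c [e1 e2].
have bc : b.1 == c.1 by rewrite part_iff e1.
apply/eqP; apply: contraT => ne.
case/orP: (lt_total H ne) => h.
  by have := WB_mono bc h; rewrite e2 ltnn.
by have := WB_mono (_ : c.1 == b.1) h; rewrite e2 ltnn; apply; rewrite eq_sym.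
Qed.
End BSide.


Lemma num_main (n r m N c : nat) :
  0 < n -> c = 2 ^ (n * n) -> m = 2 ^ r -> N = n * (n * (m * n)) ->
  c * (n*n*n * (n*n*n) + n*n*n + 1) + c * (n*n*n) * r <= 2 ^ r ->
  N ^ N * (n * n) ^ n * c.-1 ^ (m * m) < c ^ (m * m).
Proof.
move=> n0 -> mE NE hr.
set K := n * n * n.
have cpos : 1 < 2 ^ (n * n).
  by apply: (@leq_trans (2 ^ 1)) => //; apply: leq_pexp2l => //; rewrite muln_gt0 n0.
set w := K + r.
set s := w * N + K + 1.
rewrite -[c in _ < c ^ _](prednK (ltnW cpos)).
apply: (@big_ineq _ s); first by rewrite -ltnS prednK // ltnW.
- have Nm : N = K * m by rewrite NE /K [m * n]mulnC !mulnA.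
  have X1 : 1 <= m by rewrite mE expn_gt0.
  have dc : (2 ^ (n*n)).-1 <= 2 ^ (n*n) by apply: leq_pred.
  apply: (@leq_trans (2 ^ (n*n) * s)); first by rewrite leq_mul2r dc orbT.
  rewrite /s /w Nm.
  move: hr; rewrite -mE -/K => hr.
  nia.
- have NK : N <= 2 ^ w.
    rewrite /w expnD NE -mE.
    have : n * (n * (m * n)) = K * m by rewrite /K [m * n]mulnC !mulnA.
    move=> ->; rewrite leq_mul2r ltnW ?orbT // /K ltn_expl //.
  have h1 : N ^ N <= 2 ^ (w * N).
    by rewrite expnM; apply: pow_mono.
  have h2 : (n * n) ^ n <= 2 ^ K.
    rewrite /K expnM; apply: pow_mono; exact: ltnW (ltn_expl _ _).
  apply: (@leq_ltn_trans (2 ^ (w * N) * 2 ^ K)); first exact: leq_mul.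
  by rewrite -expnD /s addn1 ltn_exp2l.
Qed.

Theorem theorem8p5 :
  forall (A : finType) (EA : rel A), complete_multipartite EA ->
  exists (B : finType) (EB : rel B), complete_multipartite EB /\
    forall (ltA : rel A) (ltB : rel B),
      in_K_omega_star EA ltA -> in_K_omega_star EB ltB ->
      exists f : A -> B, embedding EA ltA EB ltB f.
Proof.
move=> A EA hA.
case: (posnP #|A|) => [n0|npos].
  exists A, EA; split => // ltA ltB _ _; exists id.
  have F : forall x : A, False by move=> x; have := card0_eq n0 x; rewrite !inE.
  by split => [x|x|x]; case: (F x).
set n := #|A|.
set c := 2 ^ (n * n).
have [r hr] := exr (c * (n*n*n * (n*n*n) + n*n*n + 1)) (c * (n*n*n)).
set m := 2 ^ r.
have Hnum : #|{: Dat A m}| * c.-1 ^ (m * m) < c ^ (m * m).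
  rewrite card_prod !card_ffun /= !card_prod !card_ord.
  by apply: (@num_main n r m _ c npos) => //.
have [g Hg] := good_exists hA Hnum.
exists (BB n (n * (m * n))), (EBg g); split; first exact: EBg_cm.
move=> ltA ltB HA HB.
set M := n * (m * n).
pose psi : {ffun BB n M -> BB n M} := [ffun u => invF (rho_inj (H:=HB)) u].
pose tau : {ffun A -> 'I_n * 'I_n} := [ffun x => (Ordinal (tA_lt HA x), Ordinal (jA_lt HA x))].
pose dd : Dat A m := (psi, tau).
have psiK : forall u, rho HB (psi u) = u by move=> u; rewrite ffunE f_invF.
have psiP : forall u, PB ltB (psi u) = u.1.
  by move=> u; have := congr1 (fun v => val v.1) (psiK u).
have psiW : forall u, WB ltB (psi u) = u.2.
  by move=> u; have := congr1 (fun v => val v.2) (psiK u).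
have psi_part : forall u v, ((psi u).1 == (psi v).1) = (u.1 == v.1).
  by move=> u v; rewrite (part_iff HB) !psiP.
have vd : valid EA dd.
  apply/andP; split; first (apply/andP; split).
  - apply/injectiveP => u v e; by rewrite -(psiK u) -(psiK v) e.
  - by apply/forallP => u; apply/forallP => v; rewrite psi_part.
  apply/forallP => x; apply/forallP => y; apply/andP; split; apply/implyP; rewrite /= !ffunE /=.
    move=> e; apply: contraTT e => ne; rewrite -val_eqE /=.
    by case/orP: (lt_total HA ne) => h; rewrite neq_ltn (jA_mono HA h) ?orbT.
  move=> nxy.
  have ne : x != y by apply: contraNneq nxy => ->; exact: (sp_refl HA).
  case/orP: (lt_total HA ne) => h.
    by rewrite neq_ltn (tA_mono HA h nxy).
  by rewrite neq_ltn (tA_mono HA h) ?orbT // (sp_symm HA).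
have [l ml] := Hg dd vd.
exists (place dd l).
have fP : forall x, place dd l x = psi ((tau x).1, Ordinal (Ylt l.1 l.2 (tau x).1 (tau x).2)) by [].
have ltf : forall x y, ltA x y -> ltB (place dd l x) (place dd l y).
  move=> x y xy; rewrite !fP; apply: (lex_lt HB); rewrite !psiP !psiW /= !ffunE /=.
  case: (boolP (same_part EA x y)) => sxy.
    rewrite (tA_eq HA sxy) eqxx ltnn /= ltn_add2l.
    exact: (jA_mono HA xy).
  by rewrite (tA_mono HA xy sxy).
split.
- exact: (place_inj vd).
- move=> x y; case: (boolP (same_part EA x y)) => sxy; last first.
    by move: ml => /forallP /(_ x) /forallP /(_ y) /implyP /(_ sxy) /eqP.
  have -> : EA x y = false.
    move: sxy; rewrite /same_part; case: eqP => [->|_] /=.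
      by case: hA => [[irr _] _]; rewrite (negbTE (irr y)).
    by case/andP => /negbTE.
  have tE : Ordinal (tA_lt HA x) == Ordinal (tA_lt HA y) by rewrite -val_eqE /= (tA_eq HA sxy).
  by rewrite /EBg !fP psi_part /= !ffunE /= tE.
- move=> x y; apply/idP/idP => [h|]; last exact: ltf.
  case: (eqVneq x y) => [e|ne].
    by move: h; rewrite e (negbTE (lt_irr HB _)).
  case/orP: (lt_total HA ne) => // yx.
  by have := lt_asym HB (ltf _ _ yx); rewrite h.
Qed.
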